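(* Let $\Gamma\curvearrowright X, I$ be a dynamical ideal with $\Gamma$ abelian, and let $W[[X]]$ be the associated permutation model. Then in $W[[X]]$: (1) every set is the union of a well-orderable collection of well-orderable sets; (2) the axiom of choice for families of finite sets implies the full axiom of choice.
   Context: Work in ZFC. $V[[X]]$ is the well-founded model of ZFCA with set of atoms exactly $X$ in which every set of elements is represented by an element; a group action of $\Gamma$ on $X$ extends to $V[[X]]$ by $\gamma\cdot A=\{\gamma\cdot B:B\in A\}$. $\mathrm{stab}(A)=\{\gamma:\gamma\cdot A=A\}$, $\mathrm{pstab}(a)=\{\gamma:\gamma\cdot B=B\ \forall B\in a\}$. A dynamical ideal $\Gamma\curvearrowright X, I$: a group $\Gamma$ acting on $X$ and a $\Gamma$-invariant ideal $I$ on $X$ containing all singletons. Its permutation model $W[[X]]$ is the class of $A\in V[[X]]$ such that $A$ and every element of its transitive closure are symmetric, where $A$ is symmetric if $\mathrm{pstab}(b)\subseteq\mathrm{stab}(A)$ for some $b\in I$. The axiom of choice for families of finite sets: every family of nonempty finite sets has a choice function. *)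

(* Defs.v *)
(** * The universe V[[X]] of sets with atoms X
    Elements are well-founded trees: either an atom, or a set given by an
    indexed family of elements. *)
Inductive ZA (X : Type) : Type :=
| atom : X -> ZA X
| mk : forall (I : Type), (I -> ZA X) -> ZA X.
Arguments atom {X} _.
Arguments mk {X} _ _.

Section Model.
Variable X : Type.

Fixpoint eqZ (a b : ZA X) {struct a} : Prop :=
  match a with
  | atom x => match b with atom y => x = y | mk _ _ => False end
  | mk Ix f =>
      match b with
      | atom _ => False
      | mk J g => (forall i, exists j, eqZ (f i) (g j)) /\
                  (forall j, exists i, eqZ (f i) (g j))
      end
  end.

Definition memZ (a b : ZA X) : Prop :=
  match b with atom _ => False | mk Ix f => exists i, eqZ a (f i) end.

Definition isSet (a : ZA X) : Prop :=
  match a with atom _ => False | mk _ _ => True end.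

Definition pairZ (a b : ZA X) : ZA X :=
  mk bool (fun t => if t then mk unit (fun _ => a)
                    else mk bool (fun t' => if t' then a else b)).

Definition succZ (a : ZA X) : ZA X :=
  match a with
  | atom _ => a
  | mk Ix f => mk (option Ix) (fun o => match o with Some i => f i | None => a end)
  end.

Fixpoint vnZ (n : nat) : ZA X :=
  match n with
  | O => mk Empty_set (fun e => match e with end)
  | S m => succZ (vnZ m)
  end.
End Model.

Arguments eqZ {X} _ _.
Arguments memZ {X} _ _.
Arguments isSet {X} _.
Arguments pairZ {X} _ _.
Arguments vnZ {X} _.

Record DynIdeal (X : Type) := {
  grp : Type;
  gmul : grp -> grp -> grp;
  gone : grp;
  ginv : grp -> grp;
  gmulA : forall g h k, gmul g (gmul h k) = gmul (gmul g h) k;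
  gmul1 : forall g, gmul gone g = g;
  gmulV : forall g, gmul (ginv g) g = gone;
  act : grp -> X -> X;
  act1 : forall x, act gone x = x;
  actM : forall g h x, act (gmul g h) x = act g (act h x);
  Id : (X -> Prop) -> Prop;
  Id_sub : forall b c, Id b -> (forall x, c x -> b x) -> Id c;
  Id_union : forall b c, Id b -> Id c -> Id (fun x => b x \/ c x);
  Id_single : forall x, Id (fun y => y = x);
  Id_inv : forall g b, Id b -> Id (fun x => exists y, b y /\ x = act g y)
}.
Arguments grp {X} _.
Arguments gmul {X} _ _ _.
Arguments act {X} _ _ _.
Arguments Id {X} _ _.

Definition abelian {X} (D : DynIdeal X) : Prop :=
  forall g h : grp D, gmul D g h = gmul D h g.

Section Perm.
Context {X : Type} (D : DynIdeal X).

Fixpoint actZ (g : grp D) (a : ZA X) : ZA X :=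
  match a with
  | atom x => atom (act D g x)
  | mk Ix f => mk Ix (fun i => actZ g (f i))
  end.

Definition pstab (b : X -> Prop) (g : grp D) : Prop :=
  forall x, b x -> act D g x = x.

Definition stab (a : ZA X) (g : grp D) : Prop := eqZ (actZ g a) a.

Definition symmetric (a : ZA X) : Prop :=
  exists b, Id D b /\ forall g, pstab b g -> stab a g.

Fixpoint HS (a : ZA X) : Prop :=
  symmetric a /\
  match a with
  | atom _ => True
  | mk Ix f => forall i, HS (f i)
  end.

(** ** Notions interpreted inside the permutation model W[[X]] = {a | HS a} *)

Definition relZ (r x y : ZA X) : Prop := memZ (pairZ x y) r.

Definition wellorderW (r a : ZA X) : Prop :=
  (forall p, memZ p r -> exists x y, memZ x a /\ memZ y a /\ eqZ p (pairZ x y)) /\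
  (forall x, memZ x a -> ~ relZ r x x) /\
  (forall x y z, memZ x a -> memZ y a -> memZ z a ->
      relZ r x y -> relZ r y z -> relZ r x z) /\
  (forall x y, memZ x a -> memZ y a -> relZ r x y \/ eqZ x y \/ relZ r y x) /\
  (forall s, HS s -> (exists z, memZ z s) -> (forall z, memZ z s -> memZ z a) ->
      exists m, memZ m s /\ forall z, memZ z s -> ~ relZ r z m).

Definition wellorderableW (a : ZA X) : Prop :=
  exists r, HS r /\ wellorderW r a.

Definition bijectionW (f a b : ZA X) : Prop :=
  (forall p, memZ p f -> exists x y, memZ x a /\ memZ y b /\ eqZ p (pairZ x y)) /\
  (forall x, memZ x a -> exists y, memZ (pairZ x y) f) /\
  (forall x y y', memZ (pairZ x y) f -> memZ (pairZ x y') f -> eqZ y y') /\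
  (forall x x' y, memZ (pairZ x y) f -> memZ (pairZ x' y) f -> eqZ x x') /\
  (forall y, memZ y b -> exists x, memZ (pairZ x y) f).

Definition finiteW (a : ZA X) : Prop :=
  exists (n : nat) f, HS f /\ bijectionW f a (vnZ n).

Definition choiceFun (f F : ZA X) : Prop :=
  (forall p, memZ p f -> exists x y, memZ x F /\ memZ y x /\ eqZ p (pairZ x y)) /\
  (forall x, memZ x F -> exists y, memZ (pairZ x y) f) /\
  (forall x y y', memZ (pairZ x y) f -> memZ (pairZ x y') f -> eqZ y y').

Definition UnionWO_W : Prop :=
  forall a, HS a -> isSet a ->
    exists c, HS c /\ isSet c /\ wellorderableW c /\
      (forall y, memZ y c -> isSet y /\ wellorderableW y) /\
      (forall z, memZ z a <-> exists y, memZ y c /\ memZ z y).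

Definition AC_W : Prop :=
  forall F, HS F -> (forall x, memZ x F -> exists z, memZ z x) ->
    exists f, HS f /\ choiceFun f F.

Definition ACfin_W : Prop :=
  forall F, HS F -> (forall x, memZ x F -> (exists z, memZ z x) /\ finiteW x) ->
    exists f, HS f /\ choiceFun f F.
End Perm.

(* Main.v *)
Require Import Defs.
From Stdlib Require Import FunctionalExtensionality PropExtensionality ClassicalEpsilon Classical Lia Arith.
From mathcomp Require ssreflect ssrfun ssrbool eqtype boolp wochoice.
Module WOM.
Import ssreflect ssrfun ssrbool eqtype boolp wochoice.
Lemma WO0 (K : Type) : exists R : K -> K -> Prop,
  forall P : K -> Prop, (exists x, P x) -> exists m, (P m /\ forall y, P y -> R m y) /\
     forall m', (P m' /\ forall y, P y -> R m' y) -> m = m'.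
Proof.
have [R wR] := well_ordering_principle {classic K}.
exists (fun x y => R x y) => P [x Px].
have ne : nonempty (fun z : {classic K} => `[< P z >]).
  by exists x; rewrite unfold_in; apply/asboolP.
have [m [[Pm lm] um]] := wR _ ne.
exists m; split.
  split; first by move: Pm; rewrite unfold_in => /asboolP.
  by move=> y Py; apply: lm; rewrite unfold_in; apply/asboolP.
move=> m' [Pm' lm']; apply: um; split.
  by rewrite unfold_in; apply/asboolP.
by move=> y; rewrite unfold_in => /asboolP; apply: lm'.
Qed.
End WOM.

Lemma WO (K : Type) : exists R : K -> K -> Prop,
  (forall x y, R x y \/ R y x) /\ (forall x y, R x y -> R y x -> x = y) /\
  (forall x y z, R x y -> R y z -> R x z) /\
  (forall P : K -> Prop, (exists x, P x) -> exists m, P m /\ forall y, P y -> R m y).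
Proof.
  destruct (WOM.WO0 K) as [R HR]. exists R.
  assert (Hrefl : forall x, R x x).
  { intro x. destruct (HR (fun z => z = x)) as [m [[Hm Hl] _]]; [eauto|]. subst. apply Hl; auto. }
  assert (Hanti : forall x y, R x y -> R y x -> x = y).
  { intros x y H1 H2. destruct (HR (fun z => z = x \/ z = y)) as [m [[Hm Hl] Hu]]; [eauto|].
    assert (E1 : m = x). { apply Hu. split; auto. intros z [->| ->]; auto. }
    assert (E2 : m = y). { apply Hu. split; auto. intros z [->| ->]; auto. }
    congruence. }
  split; [|split; [exact Hanti|split]].
  - intros x y. destruct (HR (fun z => z = x \/ z = y)) as [m [[Hm Hl] _]]; [eauto|].
    destruct Hm as [->| ->]; [left|right]; apply Hl; auto.
  - intros x y z H1 H2. destruct (HR (fun w => w = x \/ w = y \/ w = z)) as [m [[Hm Hl] _]]; [eauto|].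
    destruct Hm as [->|[->| ->]].
    + apply Hl; auto.
    + assert (x = y) by (apply Hanti; auto; apply Hl; auto). subst; auto.
    + assert (y = z) by (apply Hanti; auto; apply Hl; auto). subst; auto.
  - intros P HP. destruct (HR P HP) as [m [H _]]. eauto.
Qed.

Section Basics.
Context {X : Type}.

Lemma eqZ_refl : forall a : ZA X, eqZ a a.
Proof. induction a; simpl; auto. split; intro i; exists i; auto. Qed.

Lemma eqZ_sym : forall a b : ZA X, eqZ a b -> eqZ b a.
Proof.
  induction a as [x|I f IH]; destruct b as [y|J g]; simpl; auto.
  intros [H1 H2]. split.
  - intro j. destruct (H2 j) as [i Hi]. exists i. apply IH; auto.
  - intro i. destruct (H1 i) as [j Hj]. exists j. apply IH; auto.
Qed.

Lemma eqZ_trans : forall a b c : ZA X, eqZ a b -> eqZ b c -> eqZ a c.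
Proof.
  induction a as [x|I f IH]; destruct b as [y|J g]; destruct c as [z|K h]; simpl; try tauto.
  - congruence.
  - intros [H1 H2] [H3 H4]. split.
    + intro i. destruct (H1 i) as [j Hj]. destruct (H3 j) as [k Hk]. exists k. eauto.
    + intro k. destruct (H4 k) as [j Hj]. destruct (H2 j) as [i Hi]. exists i. eauto.
Qed.

Lemma memZ_eq : forall x x' y y' : ZA X, eqZ x x' -> eqZ y y' -> memZ x y -> memZ x' y'.
Proof.
  intros x x' [y|I f] [y'|J g] Hx Hy; simpl in *; try tauto.
  intros [i Hi]. destruct Hy as [H1 _]. destruct (H1 i) as [j Hj]. exists j.
  apply eqZ_trans with x; [apply eqZ_sym; auto|]. eapply eqZ_trans; eauto.
Qed.

Lemma eqZ_mk_pw : forall (I : Type) (f g : I -> ZA X), (forall i, eqZ (f i) (g i)) -> eqZ (mk I f) (mk I g).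
Proof. intros I f g H. simpl. split; intro i; exists i; auto. Qed.

Lemma mem_mk : forall (I : Type) (f : I -> ZA X) i, memZ (f i) (mk I f).
Proof. intros. exists i. apply eqZ_refl. Qed.

Lemma pair_eq : forall a a' b b' : ZA X, eqZ a a' -> eqZ b b' -> eqZ (pairZ a b) (pairZ a' b').
Proof.
  intros. unfold pairZ. apply eqZ_mk_pw. intros [|]; apply eqZ_mk_pw; [intros _; auto|intros [|]; auto].
Qed.

Definition sing (a : ZA X) := mk unit (fun _ => a).
Definition dbl (a b : ZA X) := mk bool (fun t => if t then a else b).

Lemma mem_pair : forall u a b : ZA X, memZ u (pairZ a b) -> eqZ u (sing a) \/ eqZ u (dbl a b).
Proof. intros u a b [[|] H]; auto. Qed.
Lemma mem_sing : forall u a : ZA X, memZ u (sing a) -> eqZ u a.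
Proof. intros u a [_ H]; auto. Qed.
Lemma mem_dbl : forall u a b : ZA X, memZ u (dbl a b) -> eqZ u a \/ eqZ u b.
Proof. intros u a b [[|] H]; auto. Qed.
Lemma sing_in_pair : forall a b : ZA X, memZ (sing a) (pairZ a b).
Proof. intros. exists true. apply eqZ_refl. Qed.
Lemma dbl_in_pair : forall a b : ZA X, memZ (dbl a b) (pairZ a b).
Proof. intros. exists false. apply eqZ_refl. Qed.
Lemma a_in_sing : forall a : ZA X, memZ a (sing a).
Proof. intros. exists tt. apply eqZ_refl. Qed.
Lemma a_in_dbl : forall a b : ZA X, memZ a (dbl a b).
Proof. intros. exists true. apply eqZ_refl. Qed.
Lemma b_in_dbl : forall a b : ZA X, memZ b (dbl a b).
Proof. intros. exists false. apply eqZ_refl. Qed.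

Ltac memtr H E := eapply memZ_eq; [apply eqZ_refl | exact E | exact H].

Lemma pair_inj : forall a b c d : ZA X, eqZ (pairZ a b) (pairZ c d) -> eqZ a c /\ eqZ b d.
Proof.
  intros a b c d E.
  assert (Eac : eqZ a c).
  { assert (H := sing_in_pair a b). assert (H' : memZ (sing a) (pairZ c d)) by memtr H E.
    destruct (mem_pair _ _ _ H') as [E1|E1].
    - apply mem_sing. memtr (a_in_sing a) E1.
    - apply eqZ_sym. apply mem_sing. apply eqZ_sym in E1. memtr (a_in_dbl c d) E1. }
  split; auto.
  assert (Hd : eqZ d a \/ eqZ d b).
  { assert (H := dbl_in_pair c d). assert (H' : memZ (dbl c d) (pairZ a b)) by memtr H (eqZ_sym _ _ E).
    destruct (mem_pair _ _ _ H') as [E1|E1].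
    - left. apply mem_sing. memtr (b_in_dbl c d) E1.
    - apply mem_dbl. memtr (b_in_dbl c d) E1. }
  assert (H := dbl_in_pair a b). assert (H' : memZ (dbl a b) (pairZ c d)) by memtr H E.
  destruct (mem_pair _ _ _ H') as [E1|E1].
  - assert (Ebc : eqZ b c) by (apply mem_sing; memtr (b_in_dbl a b) E1).
    destruct Hd as [Hd|Hd]; apply eqZ_sym; auto.
    apply eqZ_trans with a; auto. apply eqZ_trans with c; auto. apply eqZ_sym; auto.
  - assert (Hb : eqZ b c \/ eqZ b d) by (apply mem_dbl; memtr (b_in_dbl a b) E1).
    destruct Hb as [Hb|Hb]; auto.
    destruct Hd as [Hd|Hd]; apply eqZ_sym; auto.
    apply eqZ_trans with a; auto. apply eqZ_trans with c; auto. apply eqZ_sym; auto.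
Qed.

Lemma mem_irrefl : forall a : ZA X, ~ memZ a a.
Proof.
  induction a as [x|I f IH]; [simpl; auto|].
  intros [i Hi]. change (eqZ (mk I f) (f i)) in Hi. apply (IH i). eapply memZ_eq; [apply eqZ_refl| exact Hi | apply mem_mk].
Qed.

End Basics.
Section Act.
Context {X : Type} (D : DynIdeal X).

Notation one := (gone X D).
Notation inv := (ginv X D).

Lemma actZ_mul : forall g h (a : ZA X), actZ D (gmul D g h) a = actZ D g (actZ D h a).
Proof.
  intros g h. induction a as [x|I f IH]; simpl.
  - rewrite actM. reflexivity.
  - f_equal. extensionality i. apply IH.
Qed.

Lemma actZ_one : forall a : ZA X, actZ D one a = a.
Proof.
  induction a as [x|I f IH]; simpl.
  - rewrite act1. reflexivity.
  - f_equal. extensionality i. apply IH.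
Qed.

Lemma actZ_triv : forall g, (forall x, act D g x = x) -> forall a : ZA X, actZ D g a = a.
Proof.
  intros g Hg. induction a as [x|I f IH]; simpl.
  - rewrite Hg. reflexivity.
  - f_equal. extensionality i. apply IH.
Qed.

Lemma actZ_invl : forall g (a : ZA X), actZ D (inv g) (actZ D g a) = a.
Proof. intros. rewrite <- actZ_mul, gmulV. apply actZ_one. Qed.

Lemma act_invl : forall g (x : X), act D (inv g) (act D g x) = x.
Proof. intros. rewrite <- actM, gmulV. apply act1. Qed.

Lemma act_inj : forall g (x y : X), act D g x = act D g y -> x = y.
Proof. intros g x y H. rewrite <- (act_invl g x), <- (act_invl g y), H. reflexivity. Qed.

Lemma actZ_eq : forall g (a b : ZA X), eqZ a b -> eqZ (actZ D g a) (actZ D g b).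
Proof.
  intros g. induction a as [x|I f IH]; destruct b as [y|J h]; simpl; try tauto.
  - intros ->. reflexivity.
  - intros [H1 H2]. split.
    + intro i. destruct (H1 i) as [j Hj]. exists j. auto.
    + intro j. destruct (H2 j) as [i Hi]. exists i. auto.
Qed.

Lemma actZ_eq_rev : forall g (a b : ZA X), eqZ (actZ D g a) (actZ D g b) -> eqZ a b.
Proof.
  intros g a b H. apply (actZ_eq (inv g)) in H. rewrite !actZ_invl in H. exact H.
Qed.

Lemma actZ_mem : forall g (x y : ZA X), memZ x y -> memZ (actZ D g x) (actZ D g y).
Proof.
  intros g x [y|I f]; simpl; auto.
  intros [i Hi]. exists i. apply actZ_eq. auto.
Qed.

Lemma actZ_pair : forall g (u v : ZA X), actZ D g (pairZ u v) = pairZ (actZ D g u) (actZ D g v).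
Proof.
  intros. unfold pairZ. simpl. f_equal. extensionality t. destruct t; simpl; [reflexivity|].
  f_equal. extensionality t'. destruct t'; reflexivity.
Qed.

Lemma stab_eq : forall (u v : ZA X) g, eqZ u v -> stab D u g -> stab D v g.
Proof.
  unfold stab. intros u v g E H. apply eqZ_trans with (actZ D g u).
  - apply actZ_eq. apply eqZ_sym. auto.
  - eapply eqZ_trans; eauto.
Qed.

Lemma stab_pw : forall (I : Type) (f : I -> ZA X) g, (forall i, stab D (f i) g) -> stab D (mk I f) g.
Proof. intros I f g H. unfold stab. simpl. split; intro i; exists i; apply H. Qed.

Lemma stab_pair : forall (u v : ZA X) g, stab D u g -> stab D v g -> stab D (pairZ u v) g.
Proof. unfold stab. intros. rewrite actZ_pair. apply pair_eq; auto. Qed.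

Lemma HS_mk : forall b (I : Type) (f : I -> ZA X), Id D b ->
  (forall g, pstab D b g -> forall i, stab D (f i) g) -> (forall i, HS D (f i)) -> HS D (mk I f).
Proof.
  intros b I f Hb Hs Hh. split; auto. exists b. split; auto. intros g Hg. apply stab_pw. auto.
Qed.

Lemma HS_pair : forall b (u v : ZA X), Id D b ->
  (forall g, pstab D b g -> stab D u g /\ stab D v g) -> HS D u -> HS D v -> HS D (pairZ u v).
Proof.
  intros b u v Hb Hs Hu Hv. unfold pairZ. apply HS_mk with b; auto.
  - intros g Hg [|]; apply stab_pw; [intros _|intros [|]]; apply Hs; auto.
  - intros [|].
    + apply HS_mk with b; auto. intros g Hg _. apply Hs; auto.
    + apply HS_mk with b; auto; intros; destruct i; try apply Hs; auto.
Qed.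

Lemma HS_atom : forall x : X, HS D (atom x).
Proof.
  intros x. split; auto. exists (fun y => y = x). split; [apply Id_single|].
  intros g Hg. unfold stab. simpl. apply Hg. reflexivity.
Qed.

Fixpoint pure (a : ZA X) : Prop :=
  match a with atom _ => False | mk J f => forall i, pure (f i) end.

Lemma pure_act : forall g (a : ZA X), pure a -> actZ D g a = a.
Proof.
  intros g. induction a as [x|I f IH]; simpl; [tauto|].
  intros H. f_equal. extensionality i. auto.
Qed.

Lemma pure_HS : forall b (a : ZA X), Id D b -> pure a -> HS D a.
Proof.
  intros b. induction a as [x|I f IH]; simpl; [tauto|].
  intros Hb H. apply HS_mk with b; auto.
  intros g _ i. unfold stab. rewrite pure_act; auto. apply eqZ_refl.
Qed.

Lemma pure_vn : forall n, pure (@vnZ X n).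
Proof.
  induction n; simpl.
  - intros [].
  - destruct (@vnZ X n) as [x|I f]; simpl in *; [tauto|]. intros [i|]; simpl; auto.
Qed.

Lemma mem_succ : forall (y : ZA X) (I : Type) (f : I -> ZA X),
  memZ y (succZ X (mk I f)) <-> memZ y (mk I f) \/ eqZ y (mk I f).
Proof.
  intros. simpl. split.
  - intros [[i|] H]; [left; exists i; auto| right; auto].
  - intros [[i H]|H]; [exists (Some i)|exists None]; auto.
Qed.

Lemma mem_vn : forall k (y : ZA X), memZ y (vnZ k) <-> exists j, j < k /\ eqZ y (vnZ j).
Proof.
  induction k; intros y.
  - simpl. split; [intros [[] _]| intros [j [Hj _]]; lia].
  - change (vnZ (S k)) with (succZ X (@vnZ X k)).
    assert (P := pure_vn k). destruct (@vnZ X k) as [x|I f] eqn:E; [simpl in P; tauto|].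
    rewrite mem_succ. rewrite IHk. rewrite <- E. split.
    + intros [[j [Hj H]]|H]; [exists j; split; auto; lia| exists k; auto].
    + intros [j [Hj H]]. destruct (PeanoNat.Nat.eq_dec j k); [subst; right; auto| left; exists j; split; auto; lia].
Qed.

Lemma vn_inj : forall i j, eqZ (@vnZ X i) (vnZ j) -> i = j.
Proof.
  intros i j E. destruct (PeanoNat.Nat.lt_total i j) as [H|[H|H]]; auto; exfalso.
  - apply (mem_irrefl (@vnZ X i)). apply memZ_eq with (vnZ i) (vnZ j); [apply eqZ_refl| apply eqZ_sym; auto|].
    apply mem_vn. exists i. split; auto. apply eqZ_refl.
  - apply (mem_irrefl (@vnZ X j)). apply memZ_eq with (vnZ j) (vnZ i); [apply eqZ_refl| auto|].
    apply mem_vn. exists j. split; auto. apply eqZ_refl.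
Qed.

End Act.
Section Ab.
Context {X : Type} (D : DynIdeal X).
Notation one := (gone X D).
Notation inv := (ginv X D).

Lemma gmulVr (Hab : abelian D) : forall g, gmul D g (inv g) = one.
Proof. intros. rewrite Hab. apply gmulV. Qed.

Lemma actZ_invr (Hab : abelian D) : forall g (a : ZA X), actZ D g (actZ D (inv g) a) = a.
Proof. intros. rewrite <- actZ_mul, gmulVr; auto. apply actZ_one. Qed.

Lemma act_invr (Hab : abelian D) : forall g (x : X), act D g (act D (inv g) x) = x.
Proof. intros. rewrite <- actM, gmulVr; auto. apply act1. Qed.

Lemma actZ_comm (Hab : abelian D) : forall g h (a : ZA X), actZ D g (actZ D h a) = actZ D h (actZ D g a).
Proof. intros. rewrite <- !actZ_mul, Hab. reflexivity. Qed.

Lemma act_comm (Hab : abelian D) : forall g h (x : X), act D g (act D h x) = act D h (act D g x).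
Proof. intros. rewrite <- !actM, Hab. reflexivity. Qed.

Lemma stab_act (Hab : abelian D) : forall g h (a : ZA X), stab D a h -> stab D (actZ D g a) h.
Proof. unfold stab. intros. rewrite actZ_comm; auto. apply actZ_eq. auto. Qed.

Lemma HS_act (Hab : abelian D) : forall g (a : ZA X), HS D a -> HS D (actZ D g a).
Proof.
  intros g a. induction a as [x|I f IH].
  - intros _. apply HS_atom.
  - intros [[b [Hb Hs]] Hh]. split.
    + exists b. split; auto. intros h Hh'. apply (stab_act Hab g h (mk I f)). auto.
    + intro i. apply IH. apply Hh.
Qed.

Definition Supp (b : X -> Prop) (z : ZA X) := forall g, pstab D b g -> stab D z g.

Lemma Supp_eq : forall b z z', eqZ z z' -> Supp b z -> Supp b z'.
Proof. unfold Supp. intros. eapply stab_eq; eauto. Qed.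

Lemma Supp_act (Hab : abelian D) : forall b g z, Supp b z -> Supp b (actZ D g z).
Proof. unfold Supp. intros. apply stab_act; auto. Qed.

Lemma stab_sub : forall (I : Type) (f : I -> ZA X) (Q : ZA X -> Prop) g,
  stab D (mk I f) g -> (forall z z', eqZ z z' -> Q z -> Q z') ->
  (forall z, Q z -> Q (actZ D g z)) -> (forall z, Q z -> Q (actZ D (inv g) z)) ->
  stab D (mk {i : I | Q (f i)} (fun s => f (proj1_sig s))) g.
Proof.
  intros I f Q g [H1 H2] HQe HQ1 HQ2. unfold stab. simpl. split.
  - intros [i Hi]. destruct (H1 i) as [j Hj]. simpl in *.
    exists (exist _ j (HQe _ _ Hj (HQ1 _ Hi))). simpl. auto.
  - intros [j Hj]. destruct (H2 j) as [i Hi]. simpl in *.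
    assert (Qi : Q (f i)).
    { apply HQe with (actZ D (inv g) (f j)); auto.
      apply (actZ_eq D (inv g)) in Hi. rewrite actZ_invl in Hi. apply eqZ_sym. auto. }
    exists (exist _ i Qi). simpl. auto.
Qed.

Lemma bij_eq : forall f (a a' b : ZA X), bijectionW f a b -> eqZ a a' -> bijectionW f a' b.
Proof.
  intros f a a' b [B1 [B2 [B3 [B4 B5]]]] E. split; [|split; [|split; [|split]]]; auto.
  - intros p Hp. destruct (B1 p Hp) as [x [y [Hx [Hy Hp']]]]. exists x, y. split; auto.
    eapply memZ_eq; [apply eqZ_refl| exact E| exact Hx].
  - intros x Hx. apply B2. eapply memZ_eq; [apply eqZ_refl| apply eqZ_sym; exact E| exact Hx].
Qed.

Lemma Lfin : forall b k (u : {j : nat | j < k} -> ZA X), Id D b ->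
  (forall g, pstab D b g -> forall j, stab D (u j) g) -> (forall j, HS D (u j)) ->
  (forall i j, eqZ (u i) (u j) -> proj1_sig i = proj1_sig j) ->
  finiteW D (mk _ u).
Proof.
  intros b k u Hb Hs Hh Hinj.
  exists k, (mk {j : nat | j < k} (fun j => pairZ (u j) (vnZ (proj1_sig j)))).
  split.
  { apply HS_mk with b; auto.
    - intros g Hg j. apply stab_pair; auto. unfold stab. rewrite pure_act; [apply eqZ_refl|apply pure_vn].
    - intros j. apply HS_pair with b; auto.
      + intros g Hg. split; auto. unfold stab. rewrite pure_act; [apply eqZ_refl|apply pure_vn].
      + apply pure_HS with b; auto. apply pure_vn. }
  split; [|split; [|split; [|split]]].
  - intros p [j Hj]. exists (u j), (vnZ (proj1_sig j)). split; [apply mem_mk|split; auto].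
    apply mem_vn. exists (proj1_sig j). split; [apply proj2_sig|apply eqZ_refl].
  - intros x [j Hj]. exists (vnZ (proj1_sig j)). exists j. apply pair_eq; auto. apply eqZ_refl.
  - intros x y y' [i Hi] [j Hj]. apply pair_inj in Hi. apply pair_inj in Hj.
    destruct Hi as [Hi1 Hi2]. destruct Hj as [Hj1 Hj2].
    assert (proj1_sig i = proj1_sig j).
    { apply Hinj. apply eqZ_trans with x; [apply eqZ_sym|]; auto. }
    rewrite H in Hi2. apply eqZ_trans with (vnZ (proj1_sig j)); auto. apply eqZ_sym; auto.
  - intros x x' y [i Hi] [j Hj]. apply pair_inj in Hi. apply pair_inj in Hj.
    destruct Hi as [Hi1 Hi2]. destruct Hj as [Hj1 Hj2].
    assert (E : proj1_sig i = proj1_sig j).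
    { apply (@vn_inj X). apply eqZ_trans with y; [apply eqZ_sym|]; auto. }
    assert (i = j). { destruct i, j; simpl in E; subst. f_equal. apply proof_irrelevance. }
    subst. apply eqZ_trans with (u j); auto. apply eqZ_sym; auto.
  - intros y Hy. apply mem_vn in Hy. destruct Hy as [j [Hj Ey]].
    exists (u (exist _ j Hj)). exists (exist _ j Hj). simpl. apply pair_eq; auto. apply eqZ_refl.
Qed.

Lemma wo_eq : forall r (a a' : ZA X), wellorderW D r a -> eqZ a a' -> wellorderW D r a'.
Proof.
  intros r a a' [W1 [W2 [W3 [W4 W5]]]] E.
  assert (T1 : forall x, memZ x a -> memZ x a') by (intros; eapply memZ_eq; [apply eqZ_refl|exact E|auto]).
  assert (T2 : forall x, memZ x a' -> memZ x a) by (intros; eapply memZ_eq; [apply eqZ_refl|apply eqZ_sym; exact E|auto]).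
  split; [|split; [|split; [|split]]].
  - intros p Hp. destruct (W1 p Hp) as [x [y [Hx [Hy Hp']]]]. exists x, y. auto.
  - auto.
  - intros. apply W3 with y; auto.
  - auto.
  - intros s Hs Hne Hsub. apply W5; auto.
Qed.

Lemma LWO : forall b (K : Type) (f : K -> ZA X), Id D b ->
  (forall g, pstab D b g -> forall i, stab D (f i) g) -> (forall i, HS D (f i)) ->
  wellorderableW D (mk K f).
Proof.
  intros b K f Hb Hs Hh.
  destruct (WO K) as [R [Rtot [Ranti [Rtrans Rmin]]]].
  assert (Rrefl : forall x, R x x) by (intro x; destruct (Rtot x x); auto).
  set (spec := fun k m => eqZ (f m) (f k) /\ forall y, eqZ (f y) (f k) -> R m y).
  assert (Hex : forall k, exists m, spec k m).
  { intro k. destruct (Rmin (fun m => eqZ (f m) (f k))) as [m [H1 H2]]; [exists k; apply eqZ_refl|].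
    exists m. split; auto. }
  set (mm := fun k => epsilon (inhabits k) (spec k)).
  assert (Hmm : forall k, spec k (mm k)) by (intro k; apply epsilon_spec; auto).
  assert (mm_eq : forall k k', eqZ (f k) (f k') -> mm k = mm k').
  { intros k k' E. destruct (Hmm k) as [A1 A2]. destruct (Hmm k') as [B1 B2]. apply Ranti.
    - apply A2. apply eqZ_trans with (f k'); auto. apply eqZ_sym; auto.
    - apply B2. apply eqZ_trans with (f k); auto. }
  assert (eq_mm : forall k k', mm k = mm k' -> eqZ (f k) (f k')).
  { intros k k' E. destruct (Hmm k) as [A1 A2]. destruct (Hmm k') as [B1 B2].
    apply eqZ_trans with (f (mm k)); [apply eqZ_sym; auto|]. rewrite E. auto. }
  set (Lt := fun k k' => R (mm k) (mm k') /\ mm k <> mm k').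
  set (r := mk {p : K * K | Lt (fst p) (snd p)}
              (fun p => pairZ (f (fst (proj1_sig p))) (f (snd (proj1_sig p))))).
  assert (relc : forall x y, relZ r x y -> exists k k', Lt k k' /\ eqZ x (f k) /\ eqZ y (f k')).
  { intros x y [[[k k'] H] E]. simpl in E. apply pair_inj in E. exists k, k'. tauto. }
  assert (reli : forall x y k k', Lt k k' -> eqZ x (f k) -> eqZ y (f k') -> relZ r x y).
  { intros x y k k' H Ex Ey. exists (exist _ (k, k') H). simpl. apply pair_eq; auto. }
  exists r. split.
  { apply HS_mk with b; auto.
    - intros g Hg p. apply stab_pair; auto.
    - intros p. apply HS_pair with b; auto. }
  split; [|split; [|split; [|split]]].
  - intros p [[[k k'] H] E]. simpl in E. exists (f k), (f k'). split; [apply mem_mk|split; [apply mem_mk|auto]].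
  - intros x _ Hr. destruct (relc _ _ Hr) as [k [k' [[_ Hne] [E1 E2]]]]. apply Hne. apply mm_eq.
    apply eqZ_trans with x; [apply eqZ_sym|]; auto.
  - intros x y z _ _ _ H1 H2. destruct (relc _ _ H1) as [k1 [k2 [[L1 N1] [E1 E2]]]].
    destruct (relc _ _ H2) as [k3 [k4 [[L2 N2] [E3 E4]]]].
    assert (M : mm k2 = mm k3) by (apply mm_eq; apply eqZ_trans with y; [apply eqZ_sym|]; auto).
    rewrite <- M in L2, N2.
    apply reli with k1 k4; auto. split; [eapply Rtrans; eauto|].
    intro E. rewrite <- E in L2. apply N1. apply Ranti; auto.
  - intros x y [k Ek] [k' Ek']. destruct (classic (mm k = mm k')) as [E|E].
    + right; left. apply eqZ_trans with (f k); auto. apply eqZ_trans with (f k'); [apply eq_mm; auto|apply eqZ_sym; auto].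
    + destruct (Rtot (mm k) (mm k')).
      * left. apply reli with k k'; auto. split; auto.
      * right; right. apply reli with k' k; auto. split; auto.
  - intros s _ [z Hz] Hsub.
    destruct (Rmin (fun k => exists z, memZ z s /\ eqZ z (f k))) as [k0 [[z0 [Hz0 Ez0]] Hk0]].
    { destruct (Hsub z Hz) as [k Ek]. exists k, z. auto. }
    exists z0. split; auto. intros z' Hz' Hr.
    destruct (relc _ _ Hr) as [k [k' [[L N] [E1 E2]]]].
    assert (M : mm k' = mm k0) by (apply mm_eq; apply eqZ_trans with z0; [apply eqZ_sym|]; auto).
    rewrite M in L, N.
    assert (A1 : R k0 (mm k)).
    { apply Hk0. exists z'. split; auto. apply eqZ_trans with (f k); auto. apply eqZ_sym. apply Hmm. }
    assert (A2 : R (mm k0) k0) by (apply Hmm; apply eqZ_refl).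
    apply N. apply Ranti; auto. eapply Rtrans; eauto.
Qed.

End Ab.
Lemma HS_sym {X : Type} (D : DynIdeal X) : forall a : ZA X, HS D a -> symmetric D a.
Proof. intros [x|I f]; simpl; tauto. Qed.

Lemma part1 {X : Type} (D : DynIdeal X) (Hab : abelian D) : UnionWO_W D.
Proof.
  intros a Ha Hset. destruct a as [x|I f]; [contradiction|].
  destruct Ha as [[b0 [Hb0 Hs0]] Hh].
  set (C := fun B : {B : X -> Prop | Id D B} =>
        mk {i : I | Supp D (proj1_sig B) (f i)} (fun s => f (proj1_sig s))).
  assert (HC : forall B, HS D (C B)).
  { intros [B HB]. apply HS_mk with B; auto. intros g Hg [i Hi]. simpl. apply Hi; auto. }
  assert (SC : forall g, pstab D b0 g -> forall B, stab D (C B) g).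
  { intros g Hg B. apply stab_sub; auto.
    - apply Supp_eq.
    - intros. apply Supp_act; auto.
    - intros. apply Supp_act; auto. }
  exists (mk _ C). split; [|split; [|split; [|split]]].
  - apply HS_mk with b0; auto.
  - exact Logic.I.
  - apply LWO with b0; auto.
  - intros y [B E]. split.
    + destruct y; simpl in E; auto.
    + destruct B as [B HB]. destruct (LWO D B _ (fun s : {i : I | Supp D B (f i)} => f (proj1_sig s)) HB)
        as [r [Hr Wr]].
      * intros g Hg [i Hi]. simpl. apply Hi; auto.
      * intros. apply Hh.
      * exists r. split; auto. eapply wo_eq; eauto. apply eqZ_sym. exact E.
  - intros z. split.
    + intros [i Ei]. destruct (HS_sym D (f i) (Hh i)) as [B [HB SB]].
      exists (C (exist _ B HB)). split; [apply mem_mk|].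
      exists (exist _ i SB). simpl. exact Ei.
    + intros [y [[B E] Hz]].
      assert (Hz' : memZ z (C B)) by (eapply memZ_eq; [apply eqZ_refl| exact E| exact Hz]).
      destruct Hz' as [[i Hi] Ei]. exists i. exact Ei.
Qed.
Section Orb.
Context {X : Type} (D : DynIdeal X) (Hab : abelian D).
Notation one := (gone X D).
Notation inv := (ginv X D).

Definition actn (g : grp D) (e : nat) (x : X) : X := Nat.iter e (act D g) x.

Lemma actn_add : forall g m n x, actn g (m + n) x = actn g m (actn g n x).
Proof. intros g m n x. induction m; simpl; auto. unfold actn in *. simpl. rewrite IHm. reflexivity. Qed.

Lemma actn_comm : forall g h e x, act D h (actn g e x) = actn g e (act D h x).
Proof.
  intros g h e x. induction e; simpl; auto. unfold actn in *; simpl. rewrite <- IHe. apply act_comm; auto.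
Qed.

Lemma actn_inj : forall g e x y, actn g e x = actn g e y -> x = y.
Proof.
  intros g e. induction e; simpl; auto. intros x y H. unfold actn in *; simpl in H.
  apply IHe. eapply (act_inj D); eauto.
Qed.

Lemma least_nat : forall P : nat -> Prop, forall n, P n -> exists m, P m /\ forall k, P k -> m <= k.
Proof.
  intros P n. induction n as [n IH] using (well_founded_induction Wf_nat.lt_wf).
  intros Pn. destruct (classic (exists k, k < n /\ P k)) as [[k [Hk Pk]]|Hno].
  - apply (IH k Hk Pk).
  - exists n. split; auto. intros k Pk. destruct (PeanoNat.Nat.lt_ge_cases k n); auto.
    exfalso; apply Hno; eauto.
Qed.

Lemma actn_mul_fix : forall g n a, actn g n a = a -> forall q, actn g (n * q) a = a.
Proof.
  intros g n a H q. induction q.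
  - rewrite PeanoNat.Nat.mul_0_r. reflexivity.
  - replace (n * S q) with (n + n * q) by lia. rewrite actn_add, IHq. auto.
Qed.

Lemma order_ex : forall g a, act D g a <> a ->
  exists k, 2 <= k /\ forall e, 0 < e -> actn g e a = a -> e mod k = 0.
Proof.
  intros g a Hg.
  destruct (classic (exists n, 0 < n /\ actn g n a = a)) as [[n Hn]|Hno].
  - destruct (least_nat (fun n => 0 < n /\ actn g n a = a) n Hn) as [n0 [[H0 H1] Hmin]].
    exists n0. split.
    + destruct n0 as [|[|n0]]; try lia. exfalso. apply Hg. exact H1.
    + intros e He Ha. destruct (PeanoNat.Nat.eq_dec (e mod n0) 0) as [E|E]; auto. exfalso.
      assert (Hd := PeanoNat.Nat.div_mod e n0 ltac:(lia)).
      assert (Hlt := PeanoNat.Nat.mod_upper_bound e n0 ltac:(lia)).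
      assert (Hr : actn g (e mod n0) a = a).
      { rewrite Hd in Ha. rewrite PeanoNat.Nat.add_comm, actn_add, actn_mul_fix in Ha; auto. }
      assert (n0 <= e mod n0) by (apply Hmin; split; auto; lia). lia.
  - exists 2. split; auto. intros e He Ha. exfalso. apply Hno. eauto.
Qed.

Definition Pj (g : grp D) (a : X) (k j : nat) (y : X) :=
  exists m1 m2, actn g (k * m1) y = actn g (k * m2 + j) a.
Definition Aset g a k j : ZA X := mk {y : X | Pj g a k j y} (fun s => atom (proj1_sig s)).
Definition xset g a k : ZA X := mk {j : nat | j < k} (fun s => Aset g a k (proj1_sig s)).

Lemma L1 : forall g a k j, eqZ (actZ D g (Aset g a k j)) (Aset g a k (S j)).
Proof.
  intros g a k j. simpl. split.
  - intros [y [m1 [m2 Hy]]].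
    assert (P : Pj g a k (S j) (act D g y)).
    { exists m1, m2. rewrite <- actn_comm, Hy. replace (k * m2 + S j) with (1 + (k * m2 + j)) by lia.
      rewrite (actn_add g 1). reflexivity. }
    exists (exist _ _ P). reflexivity.
  - intros [t [m1 [m2 Ht]]].
    assert (P : Pj g a k j (act D (inv g) t)).
    { exists m1, m2. apply (act_inj D g). rewrite actn_comm, act_invr; auto. rewrite Ht.
      replace (k * m2 + S j) with (1 + (k * m2 + j)) by lia. rewrite (actn_add g 1). reflexivity. }
    exists (exist _ _ P). simpl. apply act_invr; auto.
Qed.

Lemma L2 : forall g a k, eqZ (Aset g a k k) (Aset g a k 0).
Proof.
  intros g a k. simpl. split.
  - intros [y [m1 [m2 Hy]]].
    assert (P : Pj g a k 0 y).
    { exists m1, (S m2). rewrite Hy. f_equal. lia. }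
    exists (exist _ _ P). reflexivity.
  - intros [y [m1 [m2 Hy]]].
    assert (P : Pj g a k k y).
    { exists (S m1), m2. replace (k * S m1) with (k + k * m1) by lia.
      replace (k * m2 + k) with (k + (k * m2 + 0)) by lia. rewrite (actn_add g k (k * m1)), (actn_add g k (k * m2 + 0)), Hy. reflexivity. }
    exists (exist _ _ P). reflexivity.
Qed.

Lemma actn_cancel : forall g p q a, q <= p -> actn g p a = actn g q a -> actn g (p - q) a = a.
Proof.
  intros g p q a H E. apply (actn_inj g q). rewrite <- actn_add. replace (q + (p - q)) with p by lia. auto.
Qed.

Lemma L3 : forall g a k, (forall e, 0 < e -> actn g e a = a -> e mod k = 0) ->
  forall i j, i < j -> j < k -> ~ eqZ (Aset g a k i) (Aset g a k j).
Proof.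
  intros g a k Hk i j Hij Hjk E. simpl in E. destruct E as [E1 _].
  assert (P : Pj g a k i (actn g i a)).
  { exists 0, 0. rewrite !PeanoNat.Nat.mul_0_r. reflexivity. }
  destruct (E1 (exist _ _ P)) as [[t [m1 [m2 Ht]]] Et]. simpl in Et. subst t.
  rewrite <- actn_add in Ht.
  assert (Hk0 : k <> 0) by lia.
  destruct (PeanoNat.Nat.lt_ge_cases (k * m1 + i) (k * m2 + j)) as [L|L].
  - symmetry in Ht. apply actn_cancel in Ht; [|lia].
    assert (M := Hk (k * m2 + j - (k * m1 + i)) ltac:(lia) Ht).
    apply PeanoNat.Nat.Div0.mod_divides in M. destruct M as [c Hc].
    assert (E : i + k * m1 + k * c = j + k * m2) by lia.
    replace (i + k * m1 + k * c) with (i + k * (m1 + c)) in E by lia.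
    destruct (PeanoNat.Nat.div_mod_unique k (m1 + c) m2 i j) as [_ Hr]; lia.
  - apply actn_cancel in Ht; [|lia].
    destruct (PeanoNat.Nat.eq_dec (k * m1 + i) (k * m2 + j)) as [Eq|Ne].
    + destruct (PeanoNat.Nat.div_mod_unique k m1 m2 i j) as [_ Hr]; lia.
    + assert (M := Hk (k * m1 + i - (k * m2 + j)) ltac:(lia) Ht).
      apply PeanoNat.Nat.Div0.mod_divides in M. destruct M as [c Hc].
      assert (E : j + k * m2 + k * c = i + k * m1) by lia.
      replace (j + k * m2 + k * c) with (j + k * (m2 + c)) in E by lia.
      destruct (PeanoNat.Nat.div_mod_unique k (m2 + c) m1 j i) as [_ Hr]; lia.
Qed.

Lemma Pj_fix : forall g a k j h y, act D h a = a -> Pj g a k j y -> Pj g a k j (act D h y).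
Proof.
  intros g a k j h y Ha [m1 [m2 Hy]]. exists m1, m2. rewrite <- actn_comm, Hy, actn_comm, Ha. reflexivity.
Qed.

Lemma L4 : forall g a k j h, act D h a = a -> stab D (Aset g a k j) h.
Proof.
  intros g a k j h Ha. unfold stab. simpl. split.
  - intros [y Hy]. exists (exist _ _ (Pj_fix g a k j h y Ha Hy)). reflexivity.
  - intros [y Hy].
    assert (Ha' : act D (inv h) a = a) by (rewrite <- Ha at 1; apply act_invl).
    exists (exist _ _ (Pj_fix g a k j (inv h) y Ha' Hy)). simpl. apply act_invr; auto.
Qed.

Lemma HS_Aset : forall g a k j, HS D (Aset g a k j).
Proof.
  intros g a k j. split.
  - exists (fun y => y = a). split; [apply Id_single|]. intros h Hh. apply L4. apply Hh. reflexivity.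
  - intros. apply HS_atom.
Qed.

Lemma Aset_next : forall g a k j, 1 <= k -> j < k -> exists j', j' < k /\ (S j = j' \/ (S j = k /\ j' = 0)) /\
   eqZ (actZ D g (Aset g a k j)) (Aset g a k j').
Proof.
  intros g a k j Hk Hj. destruct (PeanoNat.Nat.eq_dec (S j) k) as [E|E].
  - exists 0. split; [lia|split; [auto|]]. eapply eqZ_trans; [apply L1|]. rewrite E. apply L2.
  - exists (S j). split; [lia| split; auto]. apply L1.
Qed.

Lemma x_stab : forall g a k, 1 <= k -> stab D (xset g a k) g.
Proof.
  intros g a k Hk. unfold stab. simpl. split.
  - intros [j Hj]. destruct (Aset_next g a k j Hk Hj) as [j' [Hj' [_ E]]]. exists (exist _ j' Hj'). exact E.
  - intros [j Hj]. destruct j as [|j].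
    + assert (H : k - 1 < k) by lia. exists (exist (fun j => j < k) (k - 1) H). change (eqZ (actZ D g (Aset g a k (k-1))) (Aset g a k 0)). eapply eqZ_trans; [apply L1|].
      replace (S (k - 1)) with k by lia. apply L2.
    + assert (H : j < k) by lia. exists (exist (fun j => j < k) j H). apply L1.
Qed.

Lemma x_nofix : forall g a k, 2 <= k -> (forall e, 0 < e -> actn g e a = a -> e mod k = 0) ->
  forall j, j < k -> ~ eqZ (actZ D g (Aset g a k j)) (Aset g a k j).
Proof.
  intros g a k Hk Hspec j Hj E. destruct (Aset_next g a k j ltac:(lia) Hj) as [j' [Hj' [C E']]].
  assert (E2 : eqZ (Aset g a k j) (Aset g a k j')) by (eapply eqZ_trans; [apply eqZ_sym; exact E| exact E']).
  destruct C as [C|[C1 C2]].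
  - apply (L3 g a k Hspec j j'); auto; lia.
  - subst j'. apply (L3 g a k Hspec 0 j); try lia. apply eqZ_sym; auto.
Qed.

Lemma x_fin : forall g a k d, (forall e, 0 < e -> actn g e a = a -> e mod k = 0) ->
  finiteW D (actZ D d (xset g a k)).
Proof.
  intros g a k d Hspec. change (finiteW D (mk {j : nat | j < k} (fun s => actZ D d (Aset g a k (proj1_sig s))))).
  unfold finiteW.
  fold (finiteW D (mk {j : nat | j < k} (fun s => actZ D d (Aset g a k (proj1_sig s))))).
  apply Lfin with (fun y => y = a); [apply Id_single| | |].
  - intros h Hh j. apply stab_act; auto. apply L4. apply Hh. reflexivity.
  - intros j. apply HS_act; auto. apply HS_Aset.
  - intros [i Hi] [j Hj] E. change (eqZ (actZ D d (Aset g a k i)) (actZ D d (Aset g a k j))) in E. simpl. apply actZ_eq_rev in E.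
    destruct (PeanoNat.Nat.lt_total i j) as [L|[L|L]]; auto; exfalso.
    + apply (L3 g a k Hspec i j); auto.
    + apply (L3 g a k Hspec j i); auto. apply eqZ_sym; auto.
Qed.

End Orb.
Lemma stab_mk {X : Type} (D : DynIdeal X) (I : Type) (f : I -> ZA X) g :
  (forall i, exists j, eqZ (actZ D g (f i)) (f j)) /\ (forall j, exists i, eqZ (actZ D g (f i)) (f j)) ->
  stab D (mk I f) g.
Proof. intros H. exact H. Qed.

Lemma HS_xset {X : Type} (D : DynIdeal X) (Hab : abelian D) g a k : HS D (xset D g a k).
Proof.
  apply HS_mk with (fun y => y = a); [apply Id_single| |].
  - intros h Hh j. apply L4; auto; apply Hh; reflexivity.
  - intros j. apply HS_Aset; auto.
Qed.

Lemma part2 {X : Type} (D : DynIdeal X) (Hab : abelian D) : ACfin_W D -> AC_W D.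
Proof.
  intros Hfin F HF Hne.
  destruct (classic (exists d, Id D d /\ forall h, pstab D d h -> forall x, act D h x = x))
    as [[d [Hd Htriv]]|Hno].
  - assert (allHS : forall a : ZA X, HS D a).
    { induction a as [x|I f IH]; [apply HS_atom|]. apply HS_mk with d; auto.
      intros g Hg i. unfold stab. rewrite actZ_triv; [apply eqZ_refl| apply Htriv; auto]. }
    destruct F as [x|I Fi].
    + exists (mk Empty_set (fun e => match e with end)). split; [apply allHS|].
      split; [intros p [[] _]|split; [intros x0 []|intros x0 y y' [[] _]]].
    + set (inh := inhabits (mk Empty_set (fun e : Empty_set => match e with end) : ZA X)).
      set (y := fun i => epsilon inh (fun z => memZ z (Fi i))).
      assert (Hy : forall i, memZ (y i) (Fi i)) by (intro i; apply epsilon_spec; apply Hne; apply mem_mk).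
      assert (yeq : forall i j, eqZ (Fi i) (Fi j) -> y i = y j).
      { intros i j E. unfold y. f_equal. extensionality z. apply propositional_extensionality.
        split; intro H.
        - apply memZ_eq with z (Fi i); [apply eqZ_refl|exact E|exact H].
        - apply memZ_eq with z (Fi j); [apply eqZ_refl|apply eqZ_sym; exact E|exact H]. }
      exists (mk I (fun i => pairZ (Fi i) (y i))). split; [apply allHS|].
      split; [|split].
      * intros p [i E]. exists (Fi i), (y i). split; [apply mem_mk|split; auto].
      * intros x [i E]. exists (y i). exists i. apply pair_eq; auto. apply eqZ_refl.
      * intros x z z' [i Ei] [j Ej]. apply pair_inj in Ei. apply pair_inj in Ej.
        destruct Ei as [Ei1 Ei2]. destruct Ej as [Ej1 Ej2].
        assert (E : y i = y j). { apply yeq. apply eqZ_trans with x; [apply eqZ_sym|]; auto. }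
        rewrite E in Ei2. apply eqZ_trans with (y j); auto. apply eqZ_sym; auto.
  - exfalso.
    assert (Hmove : forall d, Id D d -> exists g a k, pstab D d g /\ 2 <= k /\
        (forall e, 0 < e -> actn D g e a = a -> e mod k = 0)).
    { intros d Hd. apply not_ex_all_not with (n := d) in Hno. apply not_and_or in Hno.
      destruct Hno as [|Hno]; [contradiction|]. apply not_all_ex_not in Hno. destruct Hno as [g Hg].
      apply imply_to_and in Hg. destruct Hg as [Hg Hg']. apply not_all_ex_not in Hg'.
      destruct Hg' as [a Ha]. destruct (order_ex D g a Ha) as [k Hk]. exists g, a, k. tauto. }
    set (Jt := {d : X -> Prop | Id D d}).
    assert (ch : forall d : Jt, {t : grp D * X * nat | pstab D (proj1_sig d) (fst (fst t)) /\ 2 <= snd t /\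
        forall e, 0 < e -> actn D (fst (fst t)) e (snd (fst t)) = snd (fst t) -> e mod (snd t) = 0}).
    { intro d. apply constructive_indefinite_description.
      destruct (Hmove _ (proj2_sig d)) as [g [a [k H]]]. exists (g, a, k). exact H. }
    set (xd := fun d : Jt => let t := proj1_sig (ch d) in xset D (fst (fst t)) (snd (fst t)) (snd t)).
    set (F' := mk (Jt * grp D) (fun p => actZ D (snd p) (xd (fst p)))).
    destruct (HS_sym D F HF) as [b0 [Hb0 _]].
    assert (HF' : HS D F').
    { split.
      - exists b0. split; auto. intros h _. unfold F'. apply stab_mk. split.
        + intros [d0 dl]. exists (d0, gmul D h dl). cbn [fst snd]. rewrite actZ_mul. apply eqZ_refl.
        + intros [d0 dl]. exists (d0, gmul D (ginv X D h) dl). cbn [fst snd].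
          rewrite <- actZ_mul, gmulA, gmulVr, gmul1; auto. apply eqZ_refl.
      - intros [d0 dl]. cbn [fst snd]. apply HS_act; auto. unfold xd. apply HS_xset; auto. }
    destruct (Hfin F' HF') as [f [Hf [C1 [C2 C3]]]].
    { intros x [[d0 dl] E]. change (eqZ x (actZ D dl (xd d0))) in E.
      unfold xd in E. destruct (ch d0) as [[[g a] k] [Hg [Hk Hspec]]]. cbn [fst snd proj1_sig] in E, Hg, Hk, Hspec. split.
      - exists (actZ D dl (Aset D g a k 0)).
        apply memZ_eq with (actZ D dl (Aset D g a k 0)) (actZ D dl (xset D g a k));
          [apply eqZ_refl| apply eqZ_sym; auto|].
        apply actZ_mem. assert (H0 : 0 < k) by lia. exists (exist (fun j => j < k) 0 H0). apply eqZ_refl.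
      - destruct (x_fin D Hab g a k dl Hspec) as [n [h [Hh Bh]]]. exists n, h. split; auto.
        eapply bij_eq; eauto. apply eqZ_sym; auto. }
    destruct (HS_sym D f Hf) as [d [Hd Sf]].
    set (dd := exist _ d Hd : Jt).
    assert (Hmem : memZ (xd dd) F').
    { exists (dd, gone X D). change (eqZ (xd dd) (actZ D (gone X D) (xd dd))). rewrite actZ_one. apply eqZ_refl. }
    destruct (C2 _ Hmem) as [y Hy].
    destruct (C1 _ Hy) as [x' [y' [Hx' [Hy' Ep]]]]. apply pair_inj in Ep. destruct Ep as [Ep1 Ep2].
    assert (Hyx : memZ y (xd dd)).
    { eapply memZ_eq; [apply eqZ_sym; exact Ep2| apply eqZ_sym; exact Ep1| exact Hy']. }
    unfold xd in Hy, Hyx. destruct (ch dd) as [[[g a] k] [Hg [Hk Hspec]]]. cbn [fst snd proj1_sig] in Hy, Hyx, Hg, Hk, Hspec.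
    assert (Sg := Sf g Hg).
    assert (Hy2 : memZ (pairZ (xset D g a k) (actZ D g y)) f).
    { assert (H := actZ_mem D g _ _ Hy). rewrite actZ_pair in H.
      eapply memZ_eq; [|exact Sg|exact H]. apply pair_eq; [apply x_stab; auto; lia| apply eqZ_refl]. }
    assert (E := C3 _ _ _ Hy Hy2).
    destruct Hyx as [[j Hj] Ej]. change (eqZ y (Aset D g a k j)) in Ej.
    apply (x_nofix D Hab g a k Hk Hspec j Hj).
    apply eqZ_trans with (actZ D g y); [apply actZ_eq; apply eqZ_sym; auto|].
    apply eqZ_trans with y; auto. apply eqZ_sym; auto.
Qed.

Theorem mainTheorem18 (X : Type) (D : DynIdeal X) :
  abelian D -> UnionWO_W D /\ (ACfin_W D -> AC_W D).
Proof.
  intros Hab. split; [apply part1; auto| apply part2; auto].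
Qed.
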